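(* Let $f,g$ be invertible $\mathbb F_q$-linearised polynomials over $\mathbb F_{q^h}$ and $m\ge1$. If $(f,g)$ satisfies property $(Prop_m)$, then so do $(f^{-1},f^{-1}\circ g)$ and $(g^{-1},g^{-1}\circ f)$.
   Context: An $\mathbb F_q$-linearised polynomial over $\mathbb F_{q^h}$ is $\sum_{l=0}^{h-1}a_lX^{q^l}$ with $a_l\in\mathbb F_{q^h}$, viewed as a map of $\mathbb F_{q^h}$; invertible means bijective. Identities $\equiv$ mean equality as maps. Property $(Prop_m)$: $(f,g)$ satisfies it if there exist triples $(a_j,b_j,c_j)\in(\mathbb F_{q^h}^* )^3$, $1\le j\le m$, with $(a_1,b_1,c_1)=(1,1,1)$, such that $a_jf(b_jf^{-1}(X))\equiv g(c_jg^{-1}(X))$ for every $j$, and for all $i\ne j$: $a_i\ne a_j$, $b_i\ne b_j$, $c_i\ne c_j$. *)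

(* Defs.v *)
From mathcomp Require Import all_boot all_order all_algebra all_field.
Set Implicit Arguments. Unset Strict Implicit. Unset Printing Implicit Defensive.
Import GRing.Theory.
Local Open Scope ring_scope.

(* L plays the role of F_{q^h}: a finite field with #|L| = q^h (q > 1, h > 0).
   Its subfield of order q is F_q. *)

Definition linearised (L : finFieldType) (q h : nat) (f : L -> L) : Prop :=
  exists a : 'I_h -> L, forall x : L, f x = \sum_(l < h) a l * x ^+ (q ^ l).

(* Property (Prop_m) for the pair (f,g), where finv, ginv are the
   inverse maps of f, g.  Triples indexed by 'I_m (index 0 is the
   distinguished triple (1,1,1)). *)
Definition Prop_m (L : finFieldType) (m : nat)
    (f finv g ginv : L -> L) : Prop :=
  exists a b c : 'I_m -> L,
    (forall j, [/\ a j != 0, b j != 0 & c j != 0]) /\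
    (forall j : 'I_m, val j = 0%N -> [/\ a j = 1, b j = 1 & c j = 1]) /\
    (forall j x, a j * f (b j * finv x) = g (c j * ginv x)) /\
    [/\ injective a, injective b & injective c].

(* Main.v *)
Require Import Defs.
From mathcomp Require Import all_boot all_order all_algebra all_field.
Local Open Scope ring_scope.
Import GRing.Theory.

Lemma key (L : finFieldType) (f finv g ginv : L -> L)
    (fK : cancel f finv) (finvK : cancel finv f)
    (gK : cancel g ginv) (ginvK : cancel ginv g) (a b c : L) :
  b != 0 -> (forall x, a * f (b * finv x) = g (c * ginv x)) ->
  forall u, a * u = g (c * ginv (f (b^-1 * finv u))).
Proof.
move=> b0 H u; rewrite -H fK mulrA divrr ?unitfE // mul1r finvK //.
Qed.

Theorem lemma5p13 (L : finFieldType) (q h m : nat)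
    (hq : (1 < q)%N) (hh : (0 < h)%N) (hL : #|L| = (q ^ h)%N)
    (f finv g ginv : L -> L)
    (flin : linearised q h f) (glin : linearised q h g)
    (fK : cancel f finv) (finvK : cancel finv f)
    (gK : cancel g ginv) (ginvK : cancel ginv g)
    (hm : (1 <= m)%N) :
  Prop_m m f finv g ginv ->
  Prop_m m finv f (finv \o g) (ginv \o f) /\
  Prop_m m ginv g (ginv \o f) (finv \o g).
Proof.
move=> [a [b [c [nz [one [H [ia ib ic]]]]]]].
have K : forall j u, a j * u = g (c j * ginv (f ((b j)^-1 * finv u))).
  move=> j; case: (nz j) => _ hb _.
  exact: (@key L f finv g ginv fK finvK gK ginvK (a j) (b j) (c j) hb (H j)).
have iV (k : 'I_m -> L) : injective k -> injective (fun j => (k j)^-1).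
  by move=> ik i j /invr_inj /ik.
split.
- exists (fun j => (b j)^-1), (fun j => (a j)^-1), (fun j => (c j)^-1).
  split; [|split; [|split]].
  + by move=> j; case: (nz j) => *; rewrite !invr_eq0.
  + by move=> j /one [-> -> ->]; rewrite invr1.
  + move=> j x /=.
    case: (nz j) => ha hb hc.
    have E := K j ((a j)^-1 * f x).
    rewrite mulrA divrr ?unitfE // mul1r in E.
    by rewrite [in RHS]E gK mulrA mulVr ?unitfE // mul1r ginvK fK.
  + by split; apply: iV.
- exists (fun j => (c j)^-1), a, (fun j => (b j)^-1).
  split; [|split; [|split]].
  + by move=> j; case: (nz j) => *; rewrite !invr_eq0.
  + by move=> j /one [-> -> ->]; rewrite invr1.
  + move=> j x /=.
    case: (nz j) => ha hb hc.
    rewrite K gK mulrA mulVr ?unitfE // mul1r.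
    done.
  + by split; try apply: iV.
Qed.
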